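(* Let $H$ be a core digraph with tree duality. The following are equivalent: (1) $H$ has bounded-height tree duality; (2) for some $n\ge 1$ there is a homomorphism $H_n^*\to H$; (3) in the exponential digraph $H^{H^2}$ there is a directed path from the first projection $\pi_1$ to the second projection $\pi_2$.
   Context: Digraphs are finite; loops allowed; homomorphisms are arc-preserving vertex maps. A core is a digraph every endomorphism of which is an automorphism. A set $\mathcal F$ is a complete set of obstructions for $H$ if for all $G$: $G\to H$ iff no $F\in\mathcal F$ has $F\to G$. $H$ has tree duality if it has a complete set of obstructions consisting of oriented trees (digraphs whose underlying undirected graph is a tree). The algebraic height of an oriented tree is the minimum number of arcs of a directed path to which it maps homomorphically; $H$ has bounded-height tree duality if for some constant $m$ it has a complete set of obstructions consisting of oriented trees of algebraic height at most $m$. Products are categorical: $V(G\times H)=V(G)\times V(H)$, $((g,h),(g',h'))$ an arc iff $(g,g')\in A(G)$ and $(h,h')\in A(H)$. For an equivalence $\simeq$ on $V(G)$, the quotient $G/{\simeq}$ has the classes as vertices, $(X,Y)$ an arc iff some $x\in X,y\in Y$ have $(x,y)\in A(G)$. $P_n$ is the digraph with vertices $0,\dots,n$ and arcs $(0,0),(0,1),(1,2),\dots,(n-1,n),(n,n)$. The $n$-th crushed cylinder is $H_n^*=(H^2\times P_n)/{\simeq_n}$, where $(u,v,i)\simeq_n(u',v',j)$ iff either $i=j=0$ and $u=u'$, or $i=j=n$ and $v=v'$, or $(u,v,i)=(u',v',j)$. The exponential digraph $H^{K}$ has as vertices all maps $V(K)\to V(H)$, and $(f,g)$ is an arc iff $(f(x),g(y))\in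 A(H)$ for every arc $(x,y)$ of $K$; $\pi_1,\pi_2:V(H^2)\to V(H)$ are the coordinate projections. *)

(* Defs.v *)
From mathcomp Require Import all_boot.
Set Implicit Arguments. Unset Strict Implicit. Unset Printing Implicit Defensive.

Record digraph := Digraph { vert : finType; arc : rel vert }.

Definition is_hom (G H : digraph) (f : vert G -> vert H) : Prop :=
  forall x y, arc x y -> arc (f x) (f y).
Definition hom (G H : digraph) : Prop := exists f : vert G -> vert H, is_hom f.

Definition is_aut (H : digraph) (f : vert H -> vert H) : Prop :=
  bijective f /\ forall x y, arc x y = arc (f x) (f y).

Definition is_core (H : digraph) : Prop :=
  forall f : vert H -> vert H, is_hom f -> is_aut f.

Definition und_adj (G : digraph) : rel (vert G) :=
  fun x y => (x != y) && (arc x y || arc y x).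

(* Oriented tree: underlying undirected graph is a tree, i.e. no loops, no
   pair of opposite arcs (so arcs = undirected edges), nonempty, connected,
   and #edges = #vertices - 1. *)
Definition oriented_tree (T : digraph) : Prop :=
  [/\ forall x : vert T, ~~ arc x x,
      forall x y : vert T, arc x y -> ~~ arc y x,
      0 < #|vert T|,
      forall x y : vert T, connect (@und_adj T) x y
    & #|[set p : vert T * vert T | arc p.1 p.2]| = #|vert T| - 1].

Definition complete_obstructions (F : digraph -> Prop) (H : digraph) : Prop :=
  forall G : digraph, hom G H <-> ~ (exists T, F T /\ hom T G).

Definition tree_duality (H : digraph) : Prop :=
  exists F : digraph -> Prop,
    (forall T, F T -> oriented_tree T) /\ complete_obstructions F H.

Definition dipath (k : nat) : digraph :=
  @Digraph 'I_k.+1 (fun i j => val j == (val i).+1).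

(* Algebraic height of T is at most m: T maps to a directed path with k <= m arcs
   (the minimum such k is <= m). *)
Definition alg_height_le (T : digraph) (m : nat) : Prop :=
  exists k, k <= m /\ hom T (dipath k).

Definition bounded_height_tree_duality (H : digraph) : Prop :=
  exists m : nat, exists F : digraph -> Prop,
    (forall T, F T -> oriented_tree T /\ alg_height_le T m) /\
    complete_obstructions F H.

Definition dprod (G K : digraph) : digraph :=
  @Digraph (vert G * vert K)%type
    (fun p q => arc p.1 q.1 && arc p.2 q.2).

Definition is_class (G : digraph) (e : rel (vert G)) (X : {set vert G}) : bool :=
  [exists x, X == [set y | e x y]].
Definition qvert (G : digraph) (e : rel (vert G)) : finType :=
  {X : {set vert G} | is_class e X}.
Definition dquot (G : digraph) (e : rel (vert G)) : digraph :=
  @Digraph (qvert e)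
    (fun X Y => [exists x, exists y, [&& x \in val X, y \in val Y & arc x y]]).

Definition Pn (n : nat) : digraph :=
  @Digraph 'I_n.+1
    (fun i j => [|| (val i == 0) && (val j == 0),
                    val j == (val i).+1
                  | (val i == n) && (val j == n)]).

Definition crush_rel (H : digraph) (n : nat) : rel (vert (dprod (dprod H H) (Pn n))) :=
  fun a b =>
    [|| [&& val a.2 == 0, val b.2 == 0 & a.1.1 == b.1.1],
        [&& val a.2 == n, val b.2 == n & a.1.2 == b.1.2]
      | a == b].
Arguments crush_rel : clear implicits.
Definition crushed (H : digraph) (n : nat) : digraph :=
  dquot (crush_rel H n).

Definition dexp (H K : digraph) : digraph :=
  @Digraph {ffun vert K -> vert H}
    (fun f g => [forall x, forall y, arc x y ==> arc (f x) (g y)]).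

Definition pi1 (H : digraph) : vert (dexp H (dprod H H)) := [ffun p => p.1].
Definition pi2 (H : digraph) : vert (dexp H (dprod H H)) := [ffun p => p.2].

Arguments pi1 : clear implicits.
Arguments pi2 : clear implicits.

Definition dir_path_exists (G : digraph) (a b : vert G) : Prop :=
  exists p : seq (vert G), path (@arc G) a p /\ last a p = b.

(* Main.v *)
From Stdlib Require Import Lia.
From mathcomp Require Import all_boot.
Require Import Defs.
Set Implicit Arguments. Unset Strict Implicit. Unset Printing Implicit Defensive.

Ltac tp := repeat match goal with
 | H : is_true (leq _ _) |- _ => move/leP: H => H
 | H : is_true (@eq_op _ _ _) |- _ => move/eqP: H => H
 | H : is_true (~~ _) |- _ => move/negP: H => H
 end;
 try match goal with
 | |- is_true (leq _ _) => apply/leP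
 | |- is_true (@eq_op _ _ _) => apply/eqP
 | |- is_true (~~ _) => apply/negP
 end;
 unfold addn, subn in *; lia.

Lemma hom_comp (A B C : digraph) : hom A B -> hom B C -> hom A C.
Proof. move=> [f hf] [g hg]; exists (g \o f) => x y /hf /hg; done. Qed.

Lemma hom_id (A : digraph) : hom A A.
Proof. by exists id. Qed.

Lemma walk_of_path (G : digraph) (a b : vert G) : dir_path_exists a b ->
  exists n (f : nat -> vert G),
    [/\ f 0 = a, f n = b & forall i, i < n -> arc (f i) (f i.+1)].
Proof.
case=> p []; elim: p a => [|c p IH] a /=.
  by move=> _ <-; exists 0, (fun _ => a); split.
move=> /andP[ac pc] lc; have [n [f [f0 fn fa]]] := IH c pc lc.
exists n.+1, (fun i => if i is i'.+1 then f i' else a); split=> //.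
case=> [|i] /= Hi; [by rewrite f0 | exact: fa].
Qed.

Lemma path_of_walk (G : digraph) n (f : nat -> vert G) :
  (forall i, i < n -> arc (f i) (f i.+1)) -> dir_path_exists (f 0) (f n).
Proof.
elim: n f => [|n IH] f fa; first by exists [::].
have [p [pp lp]] := IH (fun i => f i.+1) (fun i Hi => fa i.+1 Hi).
by exists (f 1 :: p); split => //=; rewrite pp fa.
Qed.

Section Quot.
Variables (G W : digraph) (e : rel (vert G)).
Definition qrep (X : qvert e) : vert G := xchoose (existsP (valP X)).
Lemma qrepP (X : qvert e) a : a \in val X -> e (qrep X) a.
Proof.
have /eqP := xchooseP (existsP (valP X)); rewrite -/(qrep X) => ->.
by rewrite inE.
Qed.

Lemma quot_hom (g : vert G -> vert W) :
  (forall a b, e a b -> g a = g b) ->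
  (forall a b, arc a b -> arc (g a) (g b)) -> hom (dquot e) W.
Proof.
move=> ge ga; exists (fun X => g (qrep X)) => X Y /=.
move=> /existsP[a /existsP[b /and3P[aX bY ab]]].
by rewrite (ge _ _ (qrepP aX)) (ge _ _ (qrepP bY)) ga.
Qed.

Lemma qcls_proof (a : vert G) : is_class e [set y | e a y].
Proof. by apply/existsP; exists a. Qed.
Definition qcls (a : vert G) : qvert e :=
  @Sub _ _ (qvert e) [set y | e a y] (qcls_proof a).

Lemma qcls_arc a b : e a a -> e b b -> arc a b -> @arc (dquot e) (qcls a) (qcls b).
Proof.
move=> ea eb ab /=; apply/existsP; exists a; apply/existsP; exists b.
by rewrite /= !inE ea eb ab.
Qed.
End Quot.

Lemma pi1_loop H : arc (pi1 H) (pi1 H).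
Proof.
by apply/forallP => x; apply/forallP => y; apply/implyP => /andP[]; rewrite !ffunE.
Qed.
Lemma pi2_loop H : arc (pi2 H) (pi2 H).
Proof.
by apply/forallP => x; apply/forallP => y; apply/implyP => /andP[]; rewrite !ffunE.
Qed.

Section Crush.
Variables (H : digraph) (n : nat).
Local Notation V := (vert (dprod (dprod H H) (Pn n))).
Local Notation e := (crush_rel H n).

Lemma crush_lev (a b : V) : e a b -> val a.2 = val b.2.
Proof.
by rewrite /crush_rel => /or3P[/and3P[/eqP-> /eqP-> _]|/and3P[/eqP-> /eqP-> _]|/eqP->].
Qed.

Lemma crush_refl (a : V) : e a a.
Proof. by apply/or3P; constructor 3. Qed.

Lemma crush0 (a c : V) : 0 < n -> val a.2 = 0 ->
  e a c = (val c.2 == 0) && (a.1.1 == c.1.1).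
Proof.
move: a c => [[u v] i] [[u' v'] k] /= n0 i0.
rewrite /crush_rel /= i0 eqxx /= (eq_sym 0 n) (negbTE (lt0n_neq0 n0)) /=.
case: (@eqP _ ((u,v),i) ((u',v'),k)) => [[-> _ <-]|_]; last by rewrite orbF.
by rewrite i0 !eqxx.
Qed.

Lemma crushn (a c : V) : 0 < n -> val a.2 = n ->
  e a c = (val c.2 == n) && (a.1.2 == c.1.2).
Proof.
move: a c => [[u v] i] [[u' v'] k] /= n0 i0.
rewrite /crush_rel /= i0 eqxx /= (negbTE (lt0n_neq0 n0)) /=.
case: (@eqP _ ((u,v),i) ((u',v'),k)) => [[_ -> <-]|_]; last by rewrite orbF.
by rewrite i0 !eqxx ?orbT.
Qed.

Lemma crushmid (a c : V) : val a.2 != 0 -> val a.2 != n -> e a c = (a == c).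
Proof.
move=> a0 an; rewrite /crush_rel (negbTE a0) (negbTE an) /=.
done.
Qed.

Lemma crush_eqv (a b : V) : 0 < n -> e a b -> e a =1 e b.
Proof.
move=> n0 ab c.
have lv := crush_lev ab.
case: (eqVneq (val a.2) 0) => [a0|a0].
  have b0 : val b.2 = 0 by rewrite -lv.
  move: ab; rewrite !crush0 // => /andP[_ /eqP->]; done.
case: (eqVneq (val a.2) n) => [an|an].
  have bn : val b.2 = n by rewrite -lv.
  move: ab; rewrite !crushn // => /andP[_ /eqP->]; done.
by move: ab; rewrite crushmid // => /eqP->.
Qed.
End Crush.

Lemma t32 H : dir_path_exists (pi1 H) (pi2 H) -> exists n, 1 <= n /\ hom (crushed H n) H.
Proof.
move/walk_of_path=> [n [f [f0 fn fa]]].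
pose f' i := f (minn i n).
have f'0: f' 0 = pi1 H by rewrite /f' min0n.
have f'n: f' n.+1 = pi2 H by rewrite /f' (minn_idPr (leqnSn n)).
have f'a: forall i, i < n.+1 -> arc (f' i) (f' i.+1).
  move=> i; rewrite ltnS leq_eqVlt => /orP[/eqP->|lt].
    rewrite /f' minnn (minn_idPr (leqnSn n)) fn; exact: pi2_loop.
  rewrite /f' (minn_idPl lt) (minn_idPl (ltnW lt)); exact: fa.
exists n.+1; split=> //.
apply: (@quot_hom _ H (crush_rel H n.+1) (fun a => f' (val a.2) a.1)).
- move=> a b /or3P[/and3P[/eqP a0 /eqP b0 /eqP u]|/and3P[/eqP an /eqP bn /eqP v]|/eqP->//].
    by rewrite a0 b0 f'0 !ffunE u.
  by rewrite an bn f'n !ffunE v.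
- move=> a b /= /andP[/andP[h1 h2] /or3P[/andP[/eqP a0 /eqP b0]|/eqP ab|/andP[/eqP an /eqP bn]]].
  + by rewrite a0 b0 f'0 !ffunE.
  + rewrite ab; have : val a.2 < n.+1 by rewrite -ltnS -ab ltn_ord.
    move/f'a => /forallP/(_ a.1)/forallP/(_ b.1)/implyP; apply.
    by rewrite /= h1 h2.
  + by rewrite an bn f'n !ffunE.
Qed.

Lemma t23 H : is_core H -> (exists n, 1 <= n /\ hom (crushed H n) H) ->
  dir_path_exists (pi1 H) (pi2 H).
Proof.
move=> core [n [n1 [h hh]]].
pose g (a : vert (dprod (dprod H H) (Pn n))) : vert H :=
  h (qcls (crush_rel H n) a).
have ga: forall a b, arc a b -> arc (g a) (g b).
  move=> a b ab; apply: hh; apply: qcls_arc => //; exact: crush_refl.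
have ge: forall a b, crush_rel H n a b -> g a = g b.
  move=> a b ab; rewrite /g; congr h; apply/val_inj => /=; apply/setP => c.
  by rewrite !inE; exact: crush_eqv.
pose al u := g ((u,u), ord0).
pose be v := g ((v,v), ord_max).
have alh : is_hom al by move=> u u' uu; apply: ga; rewrite /= uu.
have beh : is_hom be by move=> u u' uu; apply: ga; rewrite /= uu /= eqxx !orbT.
have gal u v : g ((u,v), ord0) = al u.
  by apply: ge; rewrite /crush_rel /= !eqxx.
have gbe u v : g ((u,v), ord_max) = be v.
  by apply: ge; rewrite /crush_rel /= !eqxx /= orbT.
case: (core al alh) => [[ai alK aiK] alarc].
case: (core be beh) => [[bi beK biK] bearc].
have aih: forall x y, arc x y -> arc (ai x) (ai y) by move=> x y xy; rewrite alarc !aiK.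
have bih: forall x y, arc x y -> arc (bi x) (bi y) by move=> x y xy; rewrite bearc !biK.
pose F i : vert (dexp H (dprod H H)) :=
  [ffun p : vert H * vert H => ai (g ((p.1, bi (al p.2)), inord i))].
have F0 : F 0 = pi1 H.
  apply/ffunP => p; rewrite !ffunE.
  have->: inord 0 = ord0 :> 'I_n.+1 by apply/val_inj; rewrite /= inordK.
  by rewrite gal alK.
have Fn : F n = pi2 H.
  apply/ffunP => p; rewrite !ffunE.
  have->: inord n = ord_max :> 'I_n.+1 by apply/val_inj; rewrite /= inordK.
  by rewrite gbe biK alK.
have Fa : forall i, i < n -> arc (F i) (F i.+1).
  move=> i lt; apply/forallP => p; apply/forallP => q; apply/implyP => /andP[p1 p2].
  rewrite !ffunE; apply: aih; apply: ga.
  rewrite /= p1 /= bih ?alh //= !inordK ?eqxx ?orbT //; exact: ltnW.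
rewrite -F0 -Fn; exact: path_of_walk.
Qed.

Section Levels.
Variables (H : digraph) (n : nat).
Hypothesis n0 : 0 < n.
Definition lev (X : vert (crushed H n)) : nat := val (qrep X).2.

Lemma levP (X : vert (crushed H n)) a : a \in val X -> val a.2 = lev X.
Proof. by move/qrepP/crush_lev. Qed.

Lemma rep11 (X : vert (crushed H n)) a : a \in val X -> lev X != n ->
  (qrep X).1.1 = a.1.1.
Proof.
move=> aX ln; have := qrepP aX.
case: (eqVneq (lev X) 0) => [l0|l0].
  by rewrite crush0 // => /andP[_ /eqP].
by rewrite crushmid // => /eqP->.
Qed.

Lemma rep12 (X : vert (crushed H n)) a : a \in val X -> lev X != 0 ->
  (qrep X).1.2 = a.1.2.
Proof.
move=> aX l0; have := qrepP aX.
case: (eqVneq (lev X) n) => [ln|ln].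
  by rewrite crushn // => /andP[_ /eqP].
by rewrite crushmid // => /eqP->.
Qed.

Lemma arcL (X Y : vert (crushed H n)) : arc X Y ->
  (lev X = 0 /\ lev Y = 0) \/ lev Y = (lev X).+1 \/ (lev X = n /\ lev Y = n).
Proof.
move=> /existsP[a /existsP[b /and3P[aX bY /andP[_ P]]]].
rewrite -(levP aX) -(levP bY).
by move: P => /or3P[/andP[/eqP-> /eqP->]|/eqP->|/andP[/eqP-> /eqP->]]; tauto.
Qed.
End Levels.

Lemma fwd0 (n a b la lb : nat) : a = 0 ->
  ((a = 0 /\ b = 0) \/ b = a.+1 \/ (a = n /\ b = n)) -> lb = la.+1 -> (2 <= n)%coq_nat ->
  b = 0 \/ ((0 < b)%coq_nat /\ (b < n)%coq_nat /\ b + la = lb).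
Proof. unfold addn; lia. Qed.

Lemma fwdm (n k a b la lb lw : nat) : (0 < a)%coq_nat -> (a < n)%coq_nat -> a + lw = la ->
  ((a = 0 /\ b = 0) \/ b = a.+1 \/ (a = n /\ b = n)) -> lb = la.+1 ->
  (lb <= k)%coq_nat -> (k < n)%coq_nat ->
  b = 0 \/ ((0 < b)%coq_nat /\ (b < n)%coq_nat /\ b + lw = lb).
Proof. unfold addn; lia. Qed.

Lemma bwd0 (n a b : nat) : a = 0 -> (0 < n)%coq_nat ->
  ((b = 0 /\ a = 0) \/ a = b.+1 \/ (b = n /\ a = n)) -> b = 0.
Proof. lia. Qed.

Lemma bwdm (n a b la lb lw : nat) : (0 < a)%coq_nat -> (a < n)%coq_nat -> a + lw = la ->
  ((b = 0 /\ a = 0) \/ a = b.+1 \/ (b = n /\ a = n)) -> la = lb.+1 ->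
  b = 0 \/ ((0 < b)%coq_nat /\ (b < n)%coq_nat /\ b + lw = lb).
Proof. unfold addn; lia. Qed.

Lemma t12 H : bounded_height_tree_duality H -> exists n, 1 <= n /\ hom (crushed H n) H.
Proof.
case=> m [F [FT FC]].
exists m.+2; split=> //.
apply/FC => -[T [FTT [h hh]]].
have notTH : ~ hom T H.
  by move=> THH; apply: (proj1 (FC H) (hom_id H)); exists T.
have [[_ _ _ conn _] [k [km [lam lamh]]]] := FT T FTT.
apply: notTH.
have n0 : 0 < m.+2 by [].
pose L t := lev (h t).
pose lv t := val (lam t).
have lvk : forall t, (lv t <= k)%coq_nat by move=> t; apply/leP; rewrite -ltnS ltn_ord.
have kn : (k < m.+2)%coq_nat by apply/leP; rewrite ltnS; apply: (leq_trans km).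
pose I z := L z = 0 \/ ((0 < L z)%coq_nat /\ (L z < m.+2)%coq_nat /\
                        exists w, L w = 0 /\ L z + lv w = lv z).
have step : forall z z', und_adj z z' -> I z -> I z'.
  move=> z z' /andP[_ /orP[a|a]].
    have R := arcL (hh _ _ a); have /eqP E := lamh _ _ a.
    case=> [Z|[P1 [P2 [w [Lw Ew]]]]].
      case: (fwd0 Z R E (le_n_S _ _ (le_n_S _ _ (le_0_n m)))) => [Q|[Q1 [Q2 Q3]]]; first by left.
      by right; split=> //; split=> //; exists z.
    case: (fwdm P1 P2 Ew R E (lvk z') kn) => [Q|[Q1 [Q2 Q3]]]; first by left.
    by right; split=> //; split=> //; exists w.
  have R := arcL (hh _ _ a); have /eqP E := lamh _ _ a.
  case=> [Z|[P1 [P2 [w [Lw Ew]]]]].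
    by left; apply: (bwd0 Z (leP n0) R).
  case: (bwdm P1 P2 Ew R E) => [Q|[Q1 [Q2 Q3]]]; first by left.
  by right; split=> //; split=> //; exists w.
have stepp : forall p z, path (@und_adj T) z p -> I z -> I (last z p).
  elim=> [|c p IH] z //= /andP[zc pc] Iz; apply: IH => //; exact: step Iz.
case: (pickP [pred t | L t == 0]) => [x0 /= /eqP Hx0|none].
  have Iall : forall t, I t.
    move=> t; have /connectP[p pp ->] := conn x0 t; apply: stepp => //; by left.
  have Ln : forall t, L t != m.+2.
    move=> t; case: (Iall t) => [->//|[_ [P _]]]; apply/eqP => E; rewrite E in P; lia.
  exists (fun t => (qrep (h t)).1.1) => t t' /hh /[dup] A.
  move=> /existsP[a /existsP[b /and3P[aX bY /andP[/andP[ab _] _]]]].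
  by rewrite (rep11 n0 aX (Ln t)) (rep11 n0 bY (Ln t')).
have L0 : forall t, L t != 0 by move=> t; have := none t; rewrite /= => ->.
exists (fun t => (qrep (h t)).1.2) => t t' /hh /[dup] A.
move=> /existsP[a /existsP[b /and3P[aX bY /andP[/andP[_ ab] _]]]].
by rewrite (rep12 n0 aX (L0 t)) (rep12 n0 bY (L0 t')).
Qed.

Lemma card_sum (U : finType) (P : pred U) : #|[set x | P x]| = \sum_x (P x : nat).
Proof.
rewrite -sum1dep_card big_mkcond /=; apply: eq_bigr => x _; by case: (P x).
Qed.

Section Tree.
Variable T : digraph.
Hypothesis irr : forall x : vert T, ~~ arc x x.
Hypothesis asym : forall x y : vert T, arc x y -> ~~ arc y x.

Definition er (S : {set vert T}) : rel (vert T) :=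
  fun u v => [&& u \in S, v \in S & und_adj u v].
Definition acnt (S : {set vert T}) :=
  #|[set p : vert T * vert T | [&& arc p.1 p.2, p.1 \in S & p.2 \in S]]|.
Definition nb (S : {set vert T}) (x : vert T) :=
  [set y | [&& x \in S, y \in S & und_adj x y]].

Lemma und_sym (x y : vert T) : und_adj x y = und_adj y x.
Proof. by rewrite /und_adj eq_sym orbC. Qed.

Lemma deg_sum (S : {set vert T}) : \sum_x #|nb S x| <= 2 * acnt S.
Proof.
have E : \sum_x \sum_y ([&& arc x y, x \in S & y \in S] : nat) = acnt S.
  by rewrite pair_bigA /= /acnt card_sum.
have E2 : \sum_x \sum_y ([&& arc y x, y \in S & x \in S] : nat) = acnt S.
  by rewrite exchange_big.
rewrite mul2n -addnn -{1}E -{1}E2 -big_split /=.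
apply: leq_sum => x _; rewrite card_sum -big_split /=; apply: leq_sum => y _.
rewrite /und_adj.
by case: (arc x y); case: (arc y x); case: (x \in S); case: (y \in S); case: (x != y).
Qed.

Lemma leaf (S : {set vert T}) : 1 < #|S| ->
  (forall x y, x \in S -> y \in S -> connect (er S) x y) -> acnt S < #|S| ->
  exists l w, l \in S /\ nb S l = [set w].
Proof.
move=> S2 conn ac.
case: (pickP [pred x | (x \in S) && (#|nb S x| == 1)]) => [l /andP[lS /cards1P[w Hw]]|none].
  by exists l, w.
exfalso.
have ge2 : forall x, x \in S -> 2 <= #|nb S x|.
  move=> x xS.
  have: 0 < #|S :\ x| by rewrite (cardsD1 x) xS in S2.
  case/card_gt0P => y; rewrite in_setD1 => /andP[yx yS].
  have /connectP[[|z p] /= pp ey] := conn x y xS yS.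
    by rewrite ey eqxx in yx.
  have zn : z \in nb S x by move: pp => /andP[/and3P[_ zS xz] _]; rewrite inE xS zS xz.
  have pos : 0 < #|nb S x| by apply/card_gt0P; exists z.
  have := none x; rewrite /= xS /= => /negbT ne1.
  by rewrite ltn_neqAle eq_sym ne1 pos.
have : #|S| * 2 <= 2 * acnt S.
  apply: leq_trans (deg_sum S).
  rewrite -sum_nat_const; apply: (@leq_trans (\sum_(x in S) #|nb S x|)).
    by apply: leq_sum => x xS; apply: ge2.
  by rewrite [X in _ <= X](bigID (fun x => x \in S)) /=; apply: leq_addr.
by rewrite mulnC leq_pmul2l // leqNgt ac.
Qed.

Lemma bal_aux n : forall S : {set vert T}, #|S| = n.+1 ->
  (forall x y, x \in S -> y \in S -> connect (er S) x y) -> acnt S < #|S| ->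
  exists lam : vert T -> nat,
    forall x y, x \in S -> y \in S -> arc x y -> lam y = (lam x).+1.
Proof.
elim: n => [|n IH] S cS conn ac.
  exists (fun _ => 0) => x y xS yS xy.
  move/eqP/cards1P: cS => [z Sz].
  move: xS yS; rewrite Sz !inE => /eqP Ex /eqP Ey.
  by move: xy; rewrite Ex Ey (negbTE (irr z)).
have [l [w [lS nbl]]] := @leaf S (ltac:(by rewrite cS)) conn ac.
have wn : w \in nb S l by rewrite nbl set11.
move: (wn); rewrite inE => /and3P[_ wS lw].
pose S' := S :\ l.
have cS' : #|S'| = n.+1 by move: cS; rewrite (cardsD1 l) lS add1n => -[].
have nbw : forall y, y \in S -> und_adj l y -> y = w.
  move=> y yS ly; have: y \in nb S l by rewrite inE lS yS ly.
  by rewrite nbl inE => /eqP.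
have conn' : forall x y, x \in S' -> y \in S' -> connect (er S') x y.
  move=> x y; rewrite !in_setD1 => /andP[xl xS] /andP[yl yS].
  case/connectP: (conn x y xS yS) => p pp Ey.
  move: Ey; case: (shortenP pp) => p' pp' up' _ Ey.
  have lnp : l \notin x :: p'.
    rewrite in_cons negb_or eq_sym xl /=; apply/negP => lp.
    move: up' pp' Ey; case/splitPr: lp => p1 p2 up pq Eq.
    rewrite last_cat /= in Eq.
    case: p2 up pq Eq => [|z p3] up pq Eq.
      by rewrite /= in Eq; rewrite Eq eqxx in yl.
    rewrite cat_path /= in pq.
    move: pq => /and3P[_ /and3P[lS1 _ u1] /andP[/and3P[_ zS lz] _]].
    have E1 : last x p1 = w by apply: nbw => //; rewrite und_sym.
    have E2 : z = w by apply: nbw.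
    move: up; rewrite -cat_cons cat_uniq => /and3P[_ /hasPn Hn _].
    have := Hn z; rewrite !inE eqxx orbT => /(_ isT).
    by rewrite -in_cons E2 -E1 mem_last.
  apply/connectP; exists p'; last by [].
  clear pp; elim: p' x xl xS lnp pp' {up' Ey} => [|c q IHq] x xl xS //=.
  rewrite !in_cons !negb_or => /and3P[lx lc lq] /andP[/and3P[_ cS0 xc] pq].
  apply/andP; split.
    by rewrite /er !in_setD1 xl xS cS0 xc eq_sym lc.
  by apply: IHq => //; [rewrite eq_sym | rewrite in_cons negb_or lc].
have ac' : acnt S' < #|S'|.
  have : acnt S' < acnt S.
    apply: proper_card; apply/properP; split.
      apply/subsetP => p; rewrite !inE => /and3P[-> /andP[_ ->] /andP[_ ->]] //.
    move: lw => /andP[_ /orP[a|a]].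
      by exists (l, w); rewrite !inE /= ?a ?lS ?wS ?eqxx.
    by exists (w, l); rewrite !inE /= ?a ?lS ?wS ?eqxx ?andbF.
  move: ac; rewrite cS cS' => ac H; tp.
have [lam Hlam] := IH S' cS' conn' ac'.
exists (fun x => if x == l then (if arc l w then lam w else (lam w).+2) else (lam x).+1).
move=> x y xS yS xy.
case: (eqVneq x l) => [El|xl].
  subst x.
  have ly : l != y by apply/eqP => E; rewrite -E in xy; move: (irr l); rewrite xy.
  have yw : y = w by apply: nbw => //; rewrite /und_adj ly xy.
  subst y; by rewrite eq_sym (negbTE ly) xy.
case: (eqVneq y l) => [El|yl].
  subst y.
  have lx : l != x by rewrite eq_sym.
  have xw : x = w by apply: nbw => //; rewrite /und_adj lx xy orbT.
  subst x; by rewrite ?(negbTE xl) ?eqxx (negbTE (asym xy)).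
by congr (_.+1); apply: Hlam => //; rewrite in_setD1 ?xl ?yl ?xS ?yS.
Qed.
End Tree.

Lemma tree_bal T : oriented_tree T -> exists k, hom T (dipath k).
Proof.
case=> irr asym pos conn cnt.
have [lam Hl] : exists lam : vert T -> nat, forall x y, arc x y -> lam y = (lam x).+1.
  have cS : #|[set: vert T]| = (#|vert T|.-1).+1 by rewrite cardsT prednK.
  have [||lam Hl] := bal_aux irr asym cS.
  - move=> x y _ _; rewrite (@eq_connect _ _ (@und_adj T)) //.
    by move=> u v; rewrite /er !in_setT.
  - rewrite /acnt cardsT.
    have -> : [set p : vert T * vert T | [&& arc p.1 p.2, p.1 \in [set: vert T] & p.2 \in [set: vert T]]]
            = [set p | arc p.1 p.2].
      by apply/setP => p; rewrite !inE; case: (arc _ _).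
    rewrite cnt; tp.
  - by exists lam => x y; apply: Hl; rewrite in_setT.
exists (\max_x lam x); exists (fun x => inord (lam x)) => x y xy /=.
rewrite !inordK; first by rewrite (Hl _ _ xy).
- by rewrite ltnS; exact: (@leq_bigmax (vert T) lam x).
- by rewrite ltnS; exact: (@leq_bigmax (vert T) lam y).
Qed.

Lemma glue (H G : digraph) n (f : nat -> vert (dexp H (dprod H H))) :
  f 0 = pi1 H -> f n = pi2 H -> (forall i, i < n -> arc (f i) (f i.+1)) ->
  hom (dprod G (dipath n.+1)) H -> forall K, hom (dprod G (dipath (K + n.+1))) H.
Proof.
move=> f0 fn fa [psi psih]; elim=> [|K [phi phih]]; first by exists psi.
exists (fun xi : vert G * 'I_(K.+1 + n.+1).+1 =>
  f (minn (val xi.2 - K.+1) n)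
    (phi (xi.1, inord (minn (val xi.2) (K + n.+1))), psi (xi.1, inord (val xi.2 - K.+1)))).
move=> [x i] [y j] /= /andP[xy /eqP ji].
have iN : nat_of_ord i <= (K + n.+1).
  have bj : nat_of_ord j < (K.+1 + n.+1).+1 := ltn_ord j.
  rewrite ji in bj; tp.
rewrite ji; move: iN; set i' := nat_of_ord i => iN.
case: (ltnP i' K.+1) => [lt|ge].
  have e1 : i' - K.+1 = 0 by tp.
  have e2 : i'.+1 - K.+1 = 0 by tp.
  have m1 : minn i' (K + n.+1) = i' by apply/minn_idPl.
  have m2 : minn i'.+1 (K + n.+1) = i'.+1 by apply/minn_idPl; tp.
  rewrite e1 e2 min0n f0 !ffunE /= m1 m2; apply: phih.
  by rewrite /= xy /= !inordK //; rewrite ltnS; tp.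
case: (ltnP i' (K + n.+1)) => [ltN|geN].
  have t : i' - K.+1 < n by tp.
  have e : i'.+1 - K.+1 = (i' - K.+1).+1 by tp.
  have m1 : minn i' (K + n.+1) = i' by apply/minn_idPl.
  have m2 : minn i'.+1 (K + n.+1) = i'.+1 by apply/minn_idPl.
  have m3 : minn (i' - K.+1) n = i' - K.+1 by apply/minn_idPl; exact: ltnW.
  have m4 : minn (i' - K.+1).+1 n = (i' - K.+1).+1 by apply/minn_idPl.
  rewrite ?e ?m1 ?m2 ?m3 ?m4.
  move: (fa _ t) => /forallP/(_ (_, _))/forallP/(_ (_, _))/implyP; apply.
  rewrite /= phih ?psih //=; rewrite ?xy /= ?inordK //; rewrite ?ltnS; tp.
have EN : i' = (K + n.+1) by apply/eqP; rewrite eqn_leq iN geN.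
have e1 : i' - K.+1 = n by rewrite EN  ; tp.
have e2 : i'.+1 - K.+1 = n.+1 by rewrite EN  ; tp.
rewrite e1 e2 minnn (minn_idPr (leqnSn n)) fn !ffunE /=; apply: psih.
by rewrite /= xy /= !inordK.
Qed.

Lemma t31 H : tree_duality H -> dir_path_exists (pi1 H) (pi2 H) ->
  bounded_height_tree_duality H.
Proof.
move=> [F0 [FT FC]] /walk_of_path [n [f [f0 fn fa]]].
have notH : forall T, F0 T -> ~ hom T H.
  by move=> T FTT TH; apply: (proj1 (FC H) (hom_id H)); exists T.
exists n.+1, (fun T => [/\ oriented_tree T, alg_height_le T n.+1 & ~ hom T H]).
split; first by move=> T [].
move=> G; split.
  by move=> GH [T [[_ _ nTH] TG]]; apply: nTH; exact: hom_comp TG GH.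
move=> nF.
have base : hom (dprod G (dipath n.+1)) H.
  apply/FC => -[T [FTT [g gh]]].
  apply: nF; exists T; split.
    split; first exact: FT.
      exists n.+1; split=> //; exists (fun t => (g t).2) => t t' /gh /andP[].
      by [].
    exact: notH.
  by exists (fun t => (g t).1) => t t' /gh /andP[].
have allK := glue f0 fn fa base.
apply/FC => -[T [FTT TG]].
have [k Tk] := tree_bal (FT _ FTT).
apply: (notH _ FTT).
apply: hom_comp (allK k).
case: TG => [g gh]; case: Tk => [d dh].
have le : k.+1 <= (k + n.+1).+1 by rewrite ltnS leq_addr.
exists (fun t => (g t, widen_ord le (d t))) => t t' tt'.
by apply/andP; split; [exact: gh | exact: (dh _ _ tt')].
Qed.

Theorem theorem3p2 (H : digraph) :
  is_core H -> tree_duality H ->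
  [/\ (bounded_height_tree_duality H <->
         exists n : nat, 1 <= n /\ hom (crushed H n) H),
      ((exists n : nat, 1 <= n /\ hom (crushed H n) H) <->
         dir_path_exists (pi1 H) (pi2 H))
    & (dir_path_exists (pi1 H) (pi2 H) <-> bounded_height_tree_duality H)].
Proof.
move=> core td.
have h12 := @t12 H; have h23 := t23 core; have h32 := @t32 H; have h31 := t31 td.
split; split=> X.
- exact: h12.
- exact: h31 (h23 X).
- exact: h23.
- exact: h32.
- exact: h31.
- exact: h23 (h12 X).
Qed.
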